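(* There exists an absolute constant $c_2>0$ such that for every $k\ge1$ and $p\in[0,1]$: if $f_p(n,2n)<c_2$ for some $n\ge1$, then there is $c>0$ such that for every $m\ge1$, $\mathbf P_p\big[0\overset{\mathbb S_k}{\longleftrightarrow}\partial\overline{B_m}\big]\le e^{-cm}$.
   Context: $\mathbb S_k=\mathbb Z^2\times\{0,\dots,k\}$ with nearest-neighbour edges; $\mathbf P_p$ Bernoulli bond percolation. For $T\subset\mathbb Z^2$, $\overline T=T\times\{0,\dots,k\}$; $B_m=[-m,m]^2$; $\partial U$ is the set of vertices of $U$ with a neighbour outside $U$. $f_p(m,n)$ is the probability of an open path inside $\overline{[0,m]\times[0,n]}$ from $\overline{\{0\}\times[0,n]}$ to $\overline{\{m\}\times[0,n]}$. $0\overset{\mathbb S_k}{\longleftrightarrow}\partial\overline{B_m}$ is the event of an open path from the origin to $\partial\overline{B_m}$. *)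

(* Defs.v *)
From Stdlib Require Import Reals ZArith List ClassicalEpsilon.
Import ListNotations.
Open Scope R_scope.

Definition V : Type := (Z * Z * Z)%type.

Definition vx (v : V) : Z := fst (fst v).
Definition vy (v : V) : Z := snd (fst v).
Definition vz (v : V) : Z := snd v.

Definition origin : V := (0%Z, 0%Z, 0%Z).

Definition shift (v : V) (d : nat) : V :=
  match d with
  | O => ((vx v + 1)%Z, vy v, vz v)
  | S O => (vx v, (vy v + 1)%Z, vz v)
  | _ => (vx v, vy v, (vz v + 1)%Z)
  end.

Definition inSlab (k : nat) (v : V) : Prop := (0 <= vz v <= Z.of_nat k)%Z.

Definition adjacent (u w : V) : Prop :=
  exists d : nat, (d < 3)%nat /\ (w = shift u d \/ u = shift w d).

(* A configuration assigns open(true)/closed(false) to each edge {v, v+e_d}. *)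
Definition cfg : Type := V -> nat -> bool.

Definition open_edge (om : cfg) (u w : V) : Prop :=
  exists d : nat, (d < 3)%nat /\
    ((w = shift u d /\ om u d = true) \/ (u = shift w d /\ om w d = true)).

Inductive connected_in (Rg : V -> Prop) (om : cfg) (x : V) : V -> Prop :=
  | conn_refl : Rg x -> connected_in Rg om x x
  | conn_step : forall y z, connected_in Rg om x y -> Rg z -> open_edge om y z ->
      connected_in Rg om x z.

Definition inBox (a1 b1 a2 b2 : Z) (k : nat) (v : V) : Prop :=
  (a1 <= vx v <= b1)%Z /\ (a2 <= vy v <= b2)%Z /\ (0 <= vz v <= Z.of_nat k)%Z.

Definition inBoxb (a1 b1 a2 b2 : Z) (k : nat) (v : V) : bool :=
  (Z.leb a1 (vx v) && Z.leb (vx v) b1 && Z.leb a2 (vy v) && Z.leb (vy v) b2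
   && Z.leb 0 (vz v) && Z.leb (vz v) (Z.of_nat k))%bool.

Definition zrange (a b : Z) : list Z :=
  map (fun i => (a + Z.of_nat i)%Z) (seq 0 (Z.to_nat (b - a + 1))).

Definition box_edges (a1 b1 a2 b2 : Z) (k : nat) : list (V * nat) :=
  flat_map (fun x =>
  flat_map (fun y =>
  flat_map (fun z =>
    flat_map (fun d =>
      if inBoxb a1 b1 a2 b2 k (shift (x, y, z) d) then [((x, y, z), d)] else [])
      [0%nat; 1%nat; 2%nat])
    (zrange 0 (Z.of_nat k)))
    (zrange a2 b2))
    (zrange a1 b1).

Definition V_eqb (u w : V) : bool :=
  (Z.eqb (vx u) (vx w) && Z.eqb (vy u) (vy w) && Z.eqb (vz u) (vz w))%bool.

Definition upd (om : cfg) (e : V * nat) (b : bool) : cfg :=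
  fun v d => if (V_eqb v (fst e) && Nat.eqb d (snd e))%bool then b else om v d.

Definition all_closed : cfg := fun _ _ => false.

Definition indicator (P : Prop) : R :=
  if excluded_middle_informative P then 1 else 0.

(* Product-measure probability of event A, where the edges in es are
   independently open with probability p (all other edges closed).
   For an event depending only on the edges in es (listed without repetition),
   this is exactly P_p[A]. *)
Fixpoint probAux (p : R) (es : list (V * nat)) (om : cfg) (A : cfg -> Prop) : R :=
  match es with
  | [] => indicator (A om)
  | e :: es' => p * probAux p es' (upd om e true) A
                + (1 - p) * probAux p es' (upd om e false) A
  end.

Definition Pr (p : R) (es : list (V * nat)) (A : cfg -> Prop) : R :=
  probAux p es all_closed A.

Definition f_cross (k : nat) (p : R) (m n : nat) : R :=
  Pr p (box_edges 0 (Z.of_nat m) 0 (Z.of_nat n) k)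
    (fun om => exists u w : V,
       inBox 0 (Z.of_nat m) 0 (Z.of_nat n) k u /\ vx u = 0%Z /\
       inBox 0 (Z.of_nat m) 0 (Z.of_nat n) k w /\ vx w = Z.of_nat m /\
       connected_in (inBox 0 (Z.of_nat m) 0 (Z.of_nat n) k) om u w).

Definition ballbar (k m : nat) : V -> Prop :=
  inBox (- Z.of_nat m) (Z.of_nat m) (- Z.of_nat m) (Z.of_nat m) k.

Definition vboundary (k : nat) (U : V -> Prop) (v : V) : Prop :=
  U v /\ exists w, inSlab k w /\ adjacent v w /\ ~ U w.

(* P_p[0 <-> d ballbar_m] in S_k: the event (open path in S_k from 0 to the
   boundary) only depends on edges of ballbar_m, so its probability is computed
   with those edges. *)
Definition arm_prob (k : nat) (p : R) (m : nat) : R :=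
  Pr p (box_edges (- Z.of_nat m) (Z.of_nat m) (- Z.of_nat m) (Z.of_nat m) k)
    (fun om => exists v, vboundary k (ballbar k m) v /\
                         connected_in (inSlab k) om origin v).

(* Main.v *)
Require Import Defs.
From Stdlib Require Import Reals ZArith List ClassicalEpsilon.
Open Scope R_scope.
From Stdlib Require Import Lra Lia Psatz FunctionalExtensionality Permutation.
Require Import Defs.
Import ListNotations.

Open Scope R_scope.

Fixpoint probF (p : R) (es : list (V * nat)) (om : cfg) (F : cfg -> R) : R :=
  match es with
  | [] => F om
  | e :: es' => p * probF p es' (upd om e true) F + (1 - p) * probF p es' (upd om e false) F
  end.

Lemma probAux_F p l om A : probAux p l om A = probF p l om (fun o => indicator (A o)).
Proof. revert om; induction l; intros; simpl; auto. rewrite !IHl; auto. Qed.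

Lemma Pr_F p l A : Pr p l A = probF p l all_closed (fun o => indicator (A o)).
Proof. apply probAux_F. Qed.

Definition eqE (e e' : V * nat) : {e = e'} + {e <> e'}.
Proof. repeat decide equality; apply Z.eq_dec. Defined.

Lemma V_eqb_spec u w : V_eqb u w = true <-> u = w.
Proof.
  destruct u as [[a b] c], w as [[a' b'] c']; unfold V_eqb, vx, vy, vz; simpl.
  rewrite !Bool.andb_true_iff, !Z.eqb_eq. split.
  - intros [[-> ->] ->]; reflexivity.
  - intro H; inversion H; subst; auto.
Qed.

Lemma upd_at o e b v d : upd o e b v d = if eqE (v,d) e then b else o v d.
Proof.
  unfold upd. destruct e as [w d']; cbn [fst snd].
  destruct (eqE (v,d) (w,d')) as [H|H].
  - inversion H; subst. assert (V_eqb w w = true) by (apply V_eqb_spec; auto).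
    rewrite H0, Nat.eqb_refl; reflexivity.
  - destruct (V_eqb v w) eqn:E1; destruct (Nat.eqb d d') eqn:E2; simpl; auto.
    apply V_eqb_spec in E1; apply Nat.eqb_eq in E2; subst; congruence.
Qed.

Lemma upd_same o e b b' : upd (upd o e b) e b' = upd o e b'.
Proof.
  apply functional_extensionality; intro v; apply functional_extensionality; intro d.
  rewrite !upd_at. destruct (eqE (v,d) e); auto.
Qed.

Lemma upd_comm o e e' b b' : e <> e' -> upd (upd o e b) e' b' = upd (upd o e' b') e b.
Proof.
  intro H. apply functional_extensionality; intro v; apply functional_extensionality; intro d.
  rewrite !upd_at. destruct (eqE (v,d) e'), (eqE (v,d) e); subst; auto. congruence.
Qed.

Lemma probF_upd_in p l o e b F : In e l -> probF p l (upd o e b) F = probF p l o F.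
Proof.
  revert o; induction l as [|e' l IH]; intros o Hin; simpl in *; [tauto|].
  destruct (eqE e e') as [<-|Hne].
  - rewrite !upd_same; auto.
  - destruct Hin as [Hin|Hin]; [congruence|].
    rewrite !(upd_comm _ e e') by auto. rewrite !IH; auto.
Qed.

Lemma probF_dup p l o e F : In e l -> probF p (e :: l) o F = probF p l o F.
Proof. intro H; simpl; rewrite !probF_upd_in; auto; ring. Qed.

Lemma probF_perm p l l' F : Permutation l l' -> forall o, probF p l o F = probF p l' o F.
Proof.
  induction 1; intros o; simpl; auto.
  - rewrite !IHPermutation; auto.
  - destruct (eqE x y) as [<-|Hne].
    + rewrite !upd_same; ring.
    + rewrite !(upd_comm _ x y) by auto. ring.
  - rewrite IHPermutation1; auto.
Qed.

Lemma probF_nodup p l F : forall o, probF p l o F = probF p (nodup eqE l) o F.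
Proof.
  induction l as [|a l IH]; intros o; [reflexivity|]. cbn [nodup].
  destruct (in_dec eqE a l).
  - rewrite probF_dup by auto. auto.
  - simpl. rewrite !IH; auto.
Qed.

Lemma probF_sameset p l l' F o : (forall e, In e l <-> In e l') -> probF p l o F = probF p l' o F.
Proof.
  intro H. rewrite (probF_nodup p l), (probF_nodup p l').
  apply probF_perm. apply NoDup_Permutation; try apply NoDup_nodup.
  intro e; rewrite !nodup_In; auto.
Qed.

Definition agree (S : V * nat -> Prop) (o o' : cfg) := forall v d, S (v,d) -> o v d = o' v d.
Definition dep (S : V * nat -> Prop) (F : cfg -> R) := forall o o', agree S o o' -> F o = F o'.
Definition depP (S : V * nat -> Prop) (A : cfg -> Prop) := forall o o', agree S o o' -> (A o <-> A o').

Lemma depP_dep S A : depP S A -> dep S (fun o => indicator (A o)).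
Proof.
  intros H o o' Ha. unfold indicator.
  destruct (excluded_middle_informative (A o)), (excluded_middle_informative (A o')); auto;
   exfalso; apply (H o o' Ha) in a || apply (H o o' Ha) in a; tauto.
Qed.

Lemma agree_upd S o o' e b : agree S o o' -> agree S (upd o e b) (upd o' e b).
Proof. intros H v d Hs. rewrite !upd_at. destruct (eqE (v,d) e); auto. Qed.

Lemma probF_agree p S F l : dep S F -> forall o o', agree S o o' -> probF p l o F = probF p l o' F.
Proof.
  intro HF; induction l as [|e l IH]; intros o o' Ha; simpl; auto.
  rewrite (IH (upd o e true) (upd o' e true)) by (apply agree_upd; auto).
  rewrite (IH (upd o e false) (upd o' e false)) by (apply agree_upd; auto). reflexivity.
Qed.

Lemma agree_upd_out S o e b : ~ S e -> agree S (upd o e b) o.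
Proof. intros H v d Hs. rewrite upd_at. destruct (eqE (v,d) e); subst; auto; tauto. Qed.

Lemma probF_irrel p S F l o e : dep S F -> ~ S e -> probF p (e :: l) o F = probF p l o F.
Proof.
  intros HF He; simpl.
  rewrite (probF_agree p S F l HF (upd o e true) o) by (apply agree_upd_out; auto).
  rewrite (probF_agree p S F l HF (upd o e false) o) by (apply agree_upd_out; auto). ring.
Qed.

Definition decS (S : V * nat -> Prop) (e : V * nat) : bool :=
  if excluded_middle_informative (S e) then true else false.

Lemma decS_true S e : decS S e = true <-> S e.
Proof. unfold decS; destruct (excluded_middle_informative (S e)); split; auto; congruence. Qed.

Lemma probF_filter p S F l o : dep S F -> probF p l o F = probF p (filter (decS S) l) o F.
Proof.
  intro HF; revert o; induction l as [|e l IH]; intro o; [reflexivity|]. cbn [filter].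
  destruct (decS S e) eqn:E.
  - simpl. rewrite !IH; auto.
  - rewrite (probF_irrel p S); auto. intro Hs; apply decS_true in Hs; congruence.
Qed.

Lemma probF_app p l1 l2 F o : probF p (l1 ++ l2) o F = probF p l1 o (fun o' => probF p l2 o' F).
Proof. revert o; induction l1; intro o; simpl; auto. rewrite !IHl1; auto. Qed.

Lemma probF_mult p S H G l o : dep S H -> (forall e, In e l -> ~ S e) ->
  probF p l o (fun o' => H o' * G o') = H o * probF p l o G.
Proof.
  intros HH; revert o; induction l as [|e l IH]; intros o Hl; simpl; auto.
  rewrite !IH by (intros; apply Hl; simpl; auto).
  rewrite (HH (upd o e true) o) by (apply agree_upd_out; apply Hl; simpl; auto).
  rewrite (HH (upd o e false) o) by (apply agree_upd_out; apply Hl; simpl; auto). ring.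
Qed.

Lemma probF_const p l o c : probF p l o (fun _ => c) = c.
Proof. revert o; induction l; intro o; simpl; auto. rewrite !IHl; ring. Qed.

Lemma probF_plus p l o F G : probF p l o (fun x => F x + G x) = probF p l o F + probF p l o G.
Proof. revert o; induction l; intro o; simpl; auto. rewrite !IHl; ring. Qed.

Lemma probF_scal p l o c F : probF p l o (fun x => c * F x) = c * probF p l o F.
Proof. revert o; induction l; intro o; simpl; auto. rewrite !IHl; ring. Qed.

Lemma probF_le p l o F G : 0 <= p <= 1 -> (forall x, F x <= G x) -> probF p l o F <= probF p l o G.
Proof.
  intros Hp HFG; revert o; induction l; intro o; simpl; auto.
  pose proof (IHl (upd o a true)); pose proof (IHl (upd o a false)). nra.
Qed.

Lemma probF_ext p l o F G : (forall x, F x = G x) -> probF p l o F = probF p l o G.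
Proof. intro H; replace G with F; auto. apply functional_extensionality; auto. Qed.

Lemma ind_bounds P : 0 <= indicator P <= 1.
Proof. unfold indicator; destruct (excluded_middle_informative P); lra. Qed.
Lemma ind_true (P : Prop) : P -> indicator P = 1.
Proof. unfold indicator; destruct (excluded_middle_informative P); tauto. Qed.
Lemma ind_false (P : Prop) : ~ P -> indicator P = 0.
Proof. unfold indicator; destruct (excluded_middle_informative P); tauto. Qed.
Lemma ind_mono (P Q : Prop) : (P -> Q) -> indicator P <= indicator Q.
Proof. unfold indicator; destruct (excluded_middle_informative P), (excluded_middle_informative Q); try lra; tauto. Qed.
Lemma ind_and (P Q : Prop) : indicator (P /\ Q) = indicator P * indicator Q.
Proof.
  unfold indicator; destruct (excluded_middle_informative P), (excluded_middle_informative Q),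
   (excluded_middle_informative (P /\ Q)); try lra; tauto.
Qed.
Lemma ind_or (P Q : Prop) : indicator (P \/ Q) <= indicator P + indicator Q.
Proof.
  unfold indicator; destruct (excluded_middle_informative P), (excluded_middle_informative Q),
   (excluded_middle_informative (P \/ Q)); try lra; tauto.
Qed.

Open Scope R_scope.

Definition ind (A : cfg -> Prop) : cfg -> R := fun o => indicator (A o).

Lemma probF_indep p l o S1 S2 A B : depP S1 A -> depP S2 B -> (forall e, S1 e -> S2 e -> False) ->
  probF p l o (ind (fun x => A x /\ B x)) = probF p l o (ind A) * probF p l o (ind B).
Proof.
  intros HA HB Hd.
  set (l1 := filter (decS S1) l). set (l2 := filter (decS (fun e => ~ S1 e)) l).
  assert (Hs : forall e, In e l <-> In e (l1 ++ l2)).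
  { intro e; rewrite in_app_iff; unfold l1, l2; rewrite !filter_In, !decS_true. 
    split; [intro H; destruct (classic (S1 e)); auto|tauto]. }
  rewrite (probF_sameset p l (l1 ++ l2)) by auto. rewrite probF_app.
  assert (E1 : forall o', probF p l2 o' (ind (fun x => A x /\ B x)) = ind A o' * probF p l2 o' (ind B)).
  { intro o'. rewrite <- (probF_mult p S1). apply probF_ext. intro x; unfold ind; apply ind_and.
    apply depP_dep; auto. intros e He; unfold l2 in He; rewrite filter_In, decS_true in He; tauto. }
  rewrite (probF_ext p l1 o _ (fun o' => probF p l2 o' (ind B) * ind A o')) by (intro; rewrite E1; ring).
  rewrite (probF_mult p S2).
  2:{ intros x y Ha. apply probF_agree with S2; auto. apply depP_dep; auto. }
  2:{ intros e He Hs2; unfold l1 in He; rewrite filter_In, decS_true in He. apply (Hd e); tauto. }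
  rewrite Rmult_comm. f_equal.
  - unfold l1; rewrite <- (probF_filter p S1); auto. apply depP_dep; auto.
  - rewrite (probF_filter p S2 _ l2) by (apply depP_dep; auto).
    rewrite (probF_filter p S2 _ l) by (apply depP_dep; auto).
    apply probF_sameset. intro e; unfold l2; rewrite !filter_In, !decS_true.
    split; [tauto|]. intros [H1 H2]; repeat split; auto. intro H3; apply (Hd e); auto.
Qed.

Fixpoint sumR {X} (L : list X) (f : X -> R) : R :=
  match L with [] => 0 | x :: L' => f x + sumR L' f end.

Lemma probF_sum {X} p l o (L : list X) (F : X -> cfg -> R) :
  probF p l o (fun x => sumR L (fun i => F i x)) = sumR L (fun i => probF p l o (F i)).
Proof.
  induction L; simpl. apply probF_const.
  rewrite probF_plus, IHL; auto.
Qed.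

Lemma ind_union {X} (L : list X) (A : X -> Prop) :
  indicator (exists x, In x L /\ A x) <= sumR L (fun x => indicator (A x)).
Proof.
  induction L; simpl.
  - rewrite ind_false; [lra|]. intros [x [[] _]].
  - eapply Rle_trans; [|apply Rplus_le_compat_l; apply IHL].
    eapply Rle_trans; [|apply ind_or]. apply ind_mono. intros [x [[->|H] Hx]]; eauto.
Qed.

Lemma probF_union {X} p l o (L : list X) (A : X -> cfg -> Prop) : 0 <= p <= 1 ->
  probF p l o (ind (fun x => exists i, In i L /\ A i x)) <= sumR L (fun i => probF p l o (ind (A i))).
Proof.
  intro Hp. rewrite <- probF_sum. apply probF_le; auto. intro x. apply (ind_union L (fun i => A i x)).
Qed.

Lemma probF_mono p l o (A B : cfg -> Prop) : 0 <= p <= 1 -> (forall x, A x -> B x) ->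
  probF p l o (ind A) <= probF p l o (ind B).
Proof. intros Hp H; apply probF_le; auto; intro x; apply ind_mono; auto. Qed.

Lemma sumR_le_const {X} (L : list X) f c : (forall x, In x L -> f x <= c) -> sumR L f <= INR (length L) * c.
Proof.
  induction L; cbn [sumR length]; intros H. simpl; lra.
  rewrite S_INR. pose proof (H a (or_introl eq_refl)).
  pose proof (IHL (fun x Hx => H x (or_intror Hx))). lra.
Qed.

Lemma probF_ge0 p l o F : 0 <= p <= 1 -> (forall x, 0 <= F x) -> 0 <= probF p l o F.
Proof.
  intros Hp HF. rewrite <- (probF_const p l o 0). apply probF_le; auto.
Qed.

Lemma probF_compl p l o A : probF p l o (ind A) + probF p l o (ind (fun x => ~ A x)) = 1.
Proof.
  rewrite <- probF_plus. rewrite <- (probF_const p l o 1). apply probF_ext. intro x; unfold ind, indicator.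
  destruct (excluded_middle_informative (A x)), (excluded_middle_informative (~ A x)); try lra; tauto.
Qed.

Lemma upd_closed e : upd all_closed e false = all_closed.
Proof.
  apply functional_extensionality; intro v; apply functional_extensionality; intro d.
  rewrite upd_at; destruct (eqE (v,d) e); auto.
Qed.

Lemma probF_lower p l F : 0 <= p <= 1 -> (forall x, 0 <= F x) ->
  (1 - p) ^ length l * F all_closed <= probF p l all_closed F.
Proof.
  intros Hp HF; induction l; simpl. lra.
  rewrite upd_closed. pose proof (probF_ge0 p l (upd all_closed a true) F Hp HF).
  assert (0 <= 1 - p) by lra. nra.
Qed.

Fixpoint setT (l : list (V * nat)) (o : cfg) : cfg :=
  match l with [] => o | e :: l' => setT l' (upd o e true) end.

Lemma probF_one l o F : probF 1 l o F = F (setT l o).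
Proof. revert o; induction l; intro o; simpl; auto. rewrite !IHl. ring. Qed.

Lemma setT_in l o v d : In (v,d) l -> setT l o v d = true.
Proof.
  revert o; induction l as [|e l IH]; intros o H; simpl in *. tauto.
  destruct (in_dec eqE (v,d) l). apply IH; auto.
  destruct H as [->|H]; [|tauto].
  clear IH. revert o. induction l as [|e' l IH]; intro o; simpl.
  - rewrite upd_at; destruct (eqE (v,d) (v,d)); congruence.
  - rewrite upd_comm. apply IH. intro; apply n; simpl; auto. intro; apply n; simpl; auto.
Qed.

Open Scope Z_scope.

Definition cross (Rg : V -> Prop) (f : V -> Z) (a b : Z) (om : cfg) : Prop :=
  exists u w, Rg u /\ f u = a /\ Rg w /\ f w = b /\ connected_in Rg om u w.

Lemma conn_Rg Rg om x y : connected_in Rg om x y -> Rg x /\ Rg y.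
Proof. induction 1; tauto. Qed.

Lemma conn_mono (R1 R2 : V -> Prop) om x y : (forall v, R1 v -> R2 v) ->
  connected_in R1 om x y -> connected_in R2 om x y.
Proof. intros H; induction 1; [apply conn_refl|eapply conn_step]; eauto. Qed.

Lemma open_edge_sym om y z : open_edge om y z -> open_edge om z y.
Proof. intros [d [Hd H]]; exists d; split; auto; tauto. Qed.

Lemma conn_trans Rg om x y z : connected_in Rg om x y -> connected_in Rg om y z -> connected_in Rg om x z.
Proof. intros H1 H2; induction H2; auto; eapply conn_step; eauto. Qed.

Lemma conn_edge Rg om y z : Rg y -> Rg z -> open_edge om y z -> connected_in Rg om y z.
Proof. intros; eapply conn_step; eauto; apply conn_refl; auto. Qed.

Lemma conn_sym Rg om x y : connected_in Rg om x y -> connected_in Rg om y x.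
Proof.
  induction 1. apply conn_refl; auto.
  apply conn_trans with y; auto. apply conn_edge; auto. apply (conn_Rg _ _ _ _ H). apply open_edge_sym; auto.
Qed.

Lemma cross_sym Rg f a b om : cross Rg f a b om -> cross Rg f b a om.
Proof. intros (u & w & H1 & H2 & H3 & H4 & H5). exists w, u; repeat split; auto. apply conn_sym; auto. Qed.

Lemma open_edge_step om y z : open_edge om y z ->
  Z.abs (vx z - vx y) <= 1 /\ Z.abs (vy z - vy y) <= 1 /\ Z.abs (vz z - vz y) <= 1.
Proof.
  intros [d [Hd [[-> _]|[-> _]]]];
  (destruct d as [|[|[|d]]]; [| | |lia]; simpl; unfold vx, vy, vz; simpl; lia).
Qed.

Definition lip (f : V -> Z) := forall y z : V,
  Z.abs (vx z - vx y) <= 1 -> Z.abs (vy z - vy y) <= 1 -> Z.abs (vz z - vz y) <= 1 ->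
  Z.abs (f z - f y) <= 1.

Lemma extraction Rg om f u w s t : lip f -> connected_in Rg om u w -> f u <= s -> t <= f w -> s <= t ->
  exists u' w', f u' = s /\ f w' = t /\ connected_in (fun v => Rg v /\ s <= f v <= t) om u' w'.
Proof.
  intros Hf Hc Hu Hw Hst.
  set (R' := fun v => Rg v /\ s <= f v <= t).
  assert (Inv : forall y, connected_in Rg om u y ->
    f y <= s \/ (s <= f y <= t /\ exists u', f u' = s /\ connected_in R' om u' y) \/
    (exists u' w', f u' = s /\ f w' = t /\ connected_in R' om u' w')).
  { induction 1 as [|y z Hy IH Hz Hyz]; [left; auto|].
    pose proof (open_edge_step _ _ _ Hyz) as [h1 [h2 h3]].
    pose proof (Hf y z h1 h2 h3) as Hl.
    pose proof (proj2 (conn_Rg _ _ _ _ Hy)) as Ry.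
    destruct IH as [IH|[[IH1 [u' [Hu' Hc']]]|IH]].
    - destruct (Z_le_gt_dec (f z) s). left; auto.
      destruct (Z.eq_dec s t).
      + right; right. exists y, y; repeat split; try lia. apply conn_refl; split; auto; lia.
      + right; left; split; [lia|]. exists y; split; [lia|]. apply conn_edge; auto; split; auto; lia.
    - destruct (Z.eq_dec (f y) t).
      + right; right; exists u', y; auto.
      + destruct (Z_le_gt_dec s (f z)).
        * right; left; split; [lia|]. exists u'; split; auto.
          eapply conn_step; eauto. split; auto; lia.
        * left; lia.
    - right; right; auto. }
  destruct (Inv w Hc) as [H|[[H1 [u' [Hu' Hc']]]|H]].
  - exists w, w. repeat split; try lia. apply conn_refl. split; [apply (conn_Rg _ _ _ _ Hc)|lia].
  - exists u', w; repeat split; auto; lia.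
  - auto.
Qed.

Lemma conn_restrict (R Q : V -> Prop) om u w : connected_in R om u w ->
  (forall v, connected_in R om u v -> Q v) -> connected_in (fun v => R v /\ Q v) om u w.
Proof.
  intros Hc HQ. induction Hc as [|y z Hy IH Hz Hyz].
  - apply conn_refl; split; auto. apply HQ, conn_refl; auto.
  - eapply conn_step; [apply IH|split; auto|auto].
    apply HQ. eapply conn_step; eauto.
Qed.

Definition supp (Rg : V -> Prop) (e : (V * nat)%type) : Prop :=
  (snd e < 3)%nat /\ Rg (fst e) /\ Rg (shift (fst e) (snd e)).

Lemma conn_local Rg om om' u w : connected_in Rg om u w ->
  (forall v d, supp Rg (v,d) -> om v d = om' v d) -> connected_in Rg om' u w.
Proof.
  intros Hc Ha; induction Hc as [|y z Hy IH Hz Hyz]. apply conn_refl; auto.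
  eapply conn_step; eauto. pose proof (proj2 (conn_Rg _ _ _ _ Hy)) as Ry.
  destruct Hyz as [d [Hd [[E H]|[E H]]]]; exists d; split; auto.
  - left; split; auto. rewrite <- Ha; auto. split; simpl; auto. split; auto. congruence.
  - right; split; auto. rewrite <- Ha; auto. split; simpl; auto. split; auto. congruence.
Qed.

Open Scope Z_scope.

Lemma probF_restrict p S A l l' o : depP S A -> (forall e, S e -> (In e l <-> In e l')) ->
  probF p l o (ind A) = probF p l' o (ind A).
Proof.
  intros HA Hl. pose proof (depP_dep _ _ HA) as HF.
  rewrite (probF_filter p S _ l), (probF_filter p S _ l') by auto.
  apply probF_sameset. intro e; rewrite !filter_In, !decS_true. specialize (Hl e). tauto.
Qed.

Lemma zrange_In a b i : In i (zrange a b) <-> a <= i <= b.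
Proof.
  unfold zrange. rewrite in_map_iff. split.
  - intros [j [<- Hj]]. apply in_seq in Hj. lia.
  - intro H. exists (Z.to_nat (i - a)). split. lia. apply in_seq. lia.
Qed.

Lemma inBoxb_spec a1 b1 a2 b2 k v : inBoxb a1 b1 a2 b2 k v = true <-> inBox a1 b1 a2 b2 k v.
Proof.
  unfold inBoxb, inBox. rewrite !Bool.andb_true_iff, !Z.leb_le. tauto.
Qed.

Lemma box_edges_In a1 b1 a2 b2 k e : In e (box_edges a1 b1 a2 b2 k) <-> supp (inBox a1 b1 a2 b2 k) e.
Proof.
  destruct e as [[[x y] z] d]. unfold box_edges, supp. simpl fst; simpl snd.
  rewrite in_flat_map. split.
  - intros [x' [Hx H]]. rewrite in_flat_map in H. destruct H as [y' [Hy H]].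
    rewrite in_flat_map in H. destruct H as [z' [Hz H]].
    rewrite in_flat_map in H. destruct H as [d' [Hd H]].
    destruct (inBoxb a1 b1 a2 b2 k (shift (x', y', z') d')) eqn:E; [|destruct H].
    destruct H as [H|[]]. inversion H; subst.
    apply zrange_In in Hx, Hy, Hz. apply inBoxb_spec in E.
    split. simpl in Hd; lia. split; auto. unfold inBox, vx, vy, vz; simpl; lia.
  - intros [Hd [Hb Hs]]. exists x; split. apply zrange_In; unfold inBox, vx in Hb; simpl in Hb; lia.
    rewrite in_flat_map; exists y; split. apply zrange_In; unfold inBox, vy in Hb; simpl in Hb; lia.
    rewrite in_flat_map; exists z; split. apply zrange_In; unfold inBox, vz in Hb; simpl in Hb; lia.
    rewrite in_flat_map; exists d; split. simpl; lia.
    apply inBoxb_spec in Hs. rewrite Hs. simpl; auto.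
Qed.

Lemma agree_sym S o o' : agree S o o' -> agree S o' o.
Proof. intros H v d Hs; symmetry; auto. Qed.

Lemma cross_dep Rg f a b : depP (supp Rg) (cross Rg f a b).
Proof.
  intros o o' Ha. unfold cross. split; intros (u & w & H1 & H2 & H3 & H4 & H5); exists u, w;
  repeat split; auto; eapply conn_local; eauto.
  apply agree_sym in Ha; exact Ha.
Qed.

Lemma supp_mono (R1 R2 : V -> Prop) e : (forall v, R1 v -> R2 v) -> supp R1 e -> supp R2 e.
Proof. unfold supp; intuition. Qed.

Lemma depP_mono S1 S2 A : (forall e, S1 e -> S2 e) -> depP S1 A -> depP S2 A.
Proof. intros H HA o o' Ha; apply HA; intros v d Hs; apply Ha, H; auto. Qed.

Open Scope Z_scope.

Definition edge_of (e : (V * nat)%type) (a b : V) : Prop :=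
  (fst e = a /\ shift (fst e) (snd e) = b) \/ (fst e = b /\ shift (fst e) (snd e) = a).

Lemma open_edge_iff om a b : open_edge om a b <->
  exists e, (snd e < 3)%nat /\ om (fst e) (snd e) = true /\ edge_of e a b.
Proof.
  split.
  - intros [d [Hd [[E H]|[E H]]]].
    + exists (a,d); simpl; repeat split; auto. left; auto.
    + exists (b,d); simpl; repeat split; auto. right; auto.
  - intros [[v d] [Hd [H [[E1 E2]|[E1 E2]]]]]; simpl in *; subst; exists d; split; auto.
Qed.

Record relab := {
  rho : V -> V; rhoi : V -> V; sig : (V * nat)%type -> (V * nat)%type; tau : (V * nat)%type -> (V * nat)%type;
  rho_i : forall v, rhoi (rho v) = v; rho_i' : forall v, rho (rhoi v) = v;
  st : forall e, sig (tau e) = e; ts : forall e, tau (sig e) = e;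
  sig3 : forall e, (snd e < 3)%nat -> (snd (sig e) < 3)%nat;
  tau3 : forall e, (snd e < 3)%nat -> (snd (tau e) < 3)%nat;
  compat : forall e, (snd e < 3)%nat -> edge_of (sig e) (rho (fst e)) (rho (shift (fst e) (snd e))) }.

Section RL.
Variable r : relab.

Definition Tr (om : cfg) : cfg := fun v d => om (fst (tau r (v,d))) (snd (tau r (v,d))).

Lemma Tr_upd om e b : upd (Tr om) (sig r e) b = Tr (upd om e b).
Proof.
  apply functional_extensionality; intro v; apply functional_extensionality; intro d.
  unfold Tr. rewrite !upd_at. rewrite <- surjective_pairing.
  destruct (eqE (v,d) (sig r e)) as [E|E], (eqE (tau r (v,d)) e) as [E'|E']; auto.
  - exfalso; apply E'; rewrite E, ts; auto.
  - exfalso; apply E; rewrite <- E', st; auto.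
Qed.

Lemma Tr_closed : Tr all_closed = all_closed.
Proof. reflexivity. Qed.

Lemma probF_relab p l om G : probF p (map (sig r) l) (Tr om) G = probF p l om (fun o => G (Tr o)).
Proof.
  revert om; induction l as [|e l IH]; intro om; simpl; auto.
  rewrite !Tr_upd, !IH; auto.
Qed.

Lemma edge_of_uniq x a b a0 b0 : edge_of x a b -> edge_of x a0 b0 -> (a = a0 /\ b = b0) \/ (a = b0 /\ b = a0).
Proof. unfold edge_of; intuition congruence. Qed.

Lemma edge_of_swap x a b : edge_of x a b -> edge_of x b a.
Proof. unfold edge_of; tauto. Qed.

Lemma open_edge_Tr om a b : open_edge (Tr om) (rho r a) (rho r b) <-> open_edge om a b.
Proof.
  rewrite !open_edge_iff. split.
  - intros [e' [H3 [Ho He]]]. exists (tau r e'). unfold Tr in Ho. rewrite <- surjective_pairing in Ho.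
    split; [apply tau3; auto|split; auto].
    pose proof (compat r (tau r e') (tau3 r e' H3)) as Hc. rewrite st in Hc.
    destruct (edge_of_uniq _ _ _ _ _ He Hc) as [[E1 E2]|[E1 E2]];
     apply (f_equal (rhoi r)) in E1; apply (f_equal (rhoi r)) in E2; rewrite !rho_i in E1, E2; subst.
    + left; auto.
    + right; auto.
  - intros [e [H3 [Ho He]]]. exists (sig r e). unfold Tr. rewrite <- surjective_pairing, ts.
    split; [apply sig3; auto|split; auto].
    pose proof (compat r e H3) as Hc.
    destruct He as [[E1 E2]|[E1 E2]]; subst; auto. apply edge_of_swap; auto.
Qed.

Lemma conn_Tr R1 R2 om a b : (forall v, R2 (rho r v) <-> R1 v) ->
  connected_in R1 om a b -> connected_in R2 (Tr om) (rho r a) (rho r b).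
Proof.
  intros HR; induction 1 as [|y z Hy IH Hz Hyz]. apply conn_refl; apply HR; auto.
  eapply conn_step; eauto. apply HR; auto. apply open_edge_Tr; auto.
Qed.

Lemma conn_Tr' R1 R2 om a b : (forall v, R2 (rho r v) <-> R1 v) ->
  connected_in R2 (Tr om) a b -> connected_in R1 om (rhoi r a) (rhoi r b).
Proof.
  intros HR; induction 1 as [|y z Hy IH Hz Hyz]. apply conn_refl; apply HR; rewrite rho_i'; auto.
  eapply conn_step; eauto. apply HR; rewrite rho_i'; auto. apply open_edge_Tr; rewrite !rho_i'; auto.
Qed.

Lemma cross_Tr R1 R2 f1 f2 c s t om : (forall v, R2 (rho r v) <-> R1 v) -> (forall v, f2 (rho r v) = f1 v + c) ->
  (cross R2 f2 (s + c) (t + c) (Tr om) <-> cross R1 f1 s t om).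
Proof.
  intros HR Hf. split.
  - intros (u & w & H1 & H2 & H3 & H4 & H5). exists (rhoi r u), (rhoi r w).
    rewrite <- (rho_i' r u) in H1, H2. rewrite <- (rho_i' r w) in H3, H4.
    rewrite Hf in H2, H4. rewrite HR in H1, H3.
    repeat split; auto; try lia. eapply conn_Tr'; eauto.
  - intros (u & w & H1 & H2 & H3 & H4 & H5). exists (rho r u), (rho r w).
    rewrite !Hf, !HR. repeat split; auto; try lia. apply (conn_Tr R1); auto.
Qed.

Lemma supp_tau R1 R2 e : (forall v, R2 (rho r v) <-> R1 v) -> supp R2 e -> supp R1 (tau r e).
Proof.
  intros HR [H3 [Ha Hb]]. pose proof (tau3 r e H3) as H3'.
  pose proof (compat r (tau r e) H3') as Hc. rewrite st in Hc. split; auto.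
  destruct Hc as [[E1 E2]|[E1 E2]].
  - rewrite <- HR, <- HR, <- E1, <- E2; auto.
  - rewrite <- HR, <- HR, <- E1, <- E2; auto.
Qed.

Lemma Pr_relab p l1 l2 R1 R2 f1 f2 c s t : (forall v, R2 (rho r v) <-> R1 v) -> (forall v, f2 (rho r v) = f1 v + c) ->
  (forall e, supp R1 e -> In e l1) -> (forall e, In e l2 -> supp R2 e) ->  (forall e, supp R2 e -> In e l2) ->
  Pr p l2 (cross R2 f2 (s + c) (t + c)) = Pr p l1 (cross R1 f1 s t).
Proof.
  intros HR Hf Hl1 Hl2 Hl2'. rewrite !Pr_F.
  change (probF p l2 all_closed (ind (cross R2 f2 (s+c) (t+c))) = probF p l1 all_closed (ind (cross R1 f1 s t))).
  rewrite (probF_restrict p (supp R2) _ l2 (map (sig r) l1)) by (apply cross_dep ||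
    (intros e He; split; intro; [apply in_map_iff; exists (tau r e); rewrite st; split; auto; apply Hl1; eapply supp_tau; eauto|auto])).
  rewrite <- Tr_closed at 1. rewrite probF_relab. apply probF_ext. intro o.
  unfold ind, indicator. destruct (excluded_middle_informative (cross R2 f2 (s+c) (t+c) (Tr o))) as [cc|cc],
   (excluded_middle_informative (cross R1 f1 s t o)) as [c'|c']; auto;
   exfalso; first [apply c'; apply (cross_Tr R1 R2 f1 f2 c s t o HR Hf); auto|apply cc; apply (cross_Tr R1 R2 f1 f2 c s t o HR Hf); auto].
Qed.
End RL.

Open Scope Z_scope.

Ltac vsimpl := repeat match goal with v : V |- _ => destruct v as [[? ?] ?] end;
  unfold vx, vy, vz in *; simpl in *.
Ltac teq := repeat (apply pair_equal_spec; split); try reflexivity; try lia.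

Definition trho (a b : Z) (v : V) : V := (vx v + a, vy v + b, vz v).

Program Definition trel (a b : Z) : relab := {|
  rho := trho a b; rhoi := trho (-a) (-b);
  sig := fun e => (trho a b (fst e), snd e); tau := fun e => (trho (-a) (-b) (fst e), snd e) |}.
Next Obligation. unfold trho; vsimpl; teq. Qed.
Next Obligation. unfold trho; vsimpl; teq. Qed.
Next Obligation. unfold trho; vsimpl; teq. Qed.
Next Obligation. unfold trho; vsimpl; teq. Qed.
Next Obligation.
  left; simpl; split; auto. unfold trho; vsimpl.
  destruct n as [|[|d]]; simpl; unfold vx, vy, vz; simpl; teq.
Qed.

Definition rrho (v : V) : V := (- vy v, vx v, vz v).
Definition rrhoi (v : V) : V := (vy v, - vx v, vz v).
Definition rsig (e : (V * nat)%type) : (V * nat)%type :=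
  match snd e with O => (rrho (fst e), 1%nat) | 1%nat => (rrho (shift (fst e) 1), 0%nat) | d => (rrho (fst e), d) end.
Definition rtau (e : (V * nat)%type) : (V * nat)%type :=
  match snd e with O => ((vy (fst e), - vx (fst e) - 1, vz (fst e)), 1%nat) | 1%nat => (rrhoi (fst e), 0%nat)
   | d => (rrhoi (fst e), d) end.

Program Definition rrel : relab := {| rho := rrho; rhoi := rrhoi; sig := rsig; tau := rtau |}.
Next Obligation. unfold rrho, rrhoi; vsimpl; teq. Qed.
Next Obligation. unfold rrho, rrhoi; vsimpl; teq. Qed.
Next Obligation. destruct n as [|[|d]]; unfold rsig, rtau, rrho, rrhoi; vsimpl; unfold vx, vy, vz; simpl; teq. Qed.
Next Obligation. destruct n as [|[|d]]; unfold rsig, rtau, rrho, rrhoi; vsimpl; unfold vx, vy, vz; simpl; teq. Qed.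
Next Obligation. destruct n as [|[|d]]; simpl in *; lia. Qed.
Next Obligation. destruct n as [|[|d]]; simpl in *; lia. Qed.
Next Obligation.
  destruct n as [|[|[|d]]]; simpl in H; [ | | |lia]; unfold edge_of, rsig, rrho; vsimpl;
   unfold vx, vy, vz; simpl.
  - left; split; teq.
  - right; split; teq.
  - left; split; teq.
Qed.

Lemma box_supp_iff k a1 b1 a2 b2 e : In e (box_edges a1 b1 a2 b2 k) <-> supp (inBox a1 b1 a2 b2 k) e.
Proof. apply box_edges_In. Qed.

Lemma Pr_trans p k a b a1 b1 a2 b2 a1' b1' a2' b2' (f : V -> Z) c s t s' t' :
  a1' = a1 + a -> b1' = b1 + a -> a2' = a2 + b -> b2' = b2 + b ->
  (forall v, f (trho a b v) = f v + c) -> s' = s + c -> t' = t + c ->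
  Pr p (box_edges a1' b1' a2' b2' k) (cross (inBox a1' b1' a2' b2' k) f s' t') =
  Pr p (box_edges a1 b1 a2 b2 k) (cross (inBox a1 b1 a2 b2 k) f s t).
Proof.
  intros E1 E2 E3 E4 Hf -> ->.
  apply (Pr_relab (trel a b)); simpl; auto.
  - intro v; unfold inBox, trho; vsimpl; lia.
  - intros e He; apply box_supp_iff; auto.
  - intros e He; apply box_supp_iff; auto.
  - intros e He; apply box_supp_iff; auto.
Qed.

Lemma Pr_rot p k a1 b1 a2 b2 s t :
  Pr p (box_edges (-b2) (-a2) a1 b1 k) (cross (inBox (-b2) (-a2) a1 b1 k) vy s t) =
  Pr p (box_edges a1 b1 a2 b2 k) (cross (inBox a1 b1 a2 b2 k) vx s t).
Proof.
  replace s with (s + 0) at 1 by ring. replace t with (t + 0) at 1 by ring.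
  apply (Pr_relab rrel); simpl; auto.
  - intro v; unfold inBox, rrho; vsimpl; lia.
  - intro v; unfold rrho; vsimpl; lia.
  - intros e He; apply box_supp_iff; auto.
  - intros e He; apply box_supp_iff; auto.
  - intros e He; apply box_supp_iff; auto.
Qed.

Open Scope Z_scope.

Lemma cross_mono (R1 R2 : V -> Prop) f a b om : (forall v, R1 v -> R2 v) -> cross R1 f a b om -> cross R2 f a b om.
Proof.
  intros H (u & w & H1 & H2 & H3 & H4 & H5). exists u, w; repeat split; auto. eapply conn_mono; eauto.
Qed.

Lemma lip_vx : lip vx. Proof. intros y z; lia. Qed.
Lemma lip_vy : lip vy. Proof. intros y z; lia. Qed.
Lemma lip_opp f : lip f -> lip (fun v => - f v). Proof. intros H y z h1 h2 h3; specialize (H y z h1 h2 h3); lia. Qed.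

Lemma D3gen (P : V -> Prop) fx fy om x0 y0 N : lip fx -> lip fy -> 0 <= N ->
  cross (fun v => P v /\ x0 <= fx v <= x0 + N /\ y0 <= fy v <= y0 + 3 * N) fx x0 (x0 + N) om ->
  cross (fun v => P v /\ x0 <= fx v <= x0 + N /\ y0 <= fy v <= y0 + 2 * N) fx x0 (x0 + N) om \/
  cross (fun v => P v /\ x0 <= fx v <= x0 + N /\ y0 + N <= fy v <= y0 + 3 * N) fx x0 (x0 + N) om \/
  cross (fun v => P v /\ x0 <= fx v <= x0 + N /\ y0 + N <= fy v <= y0 + 2 * N) fy (y0 + N) (y0 + 2 * N) om.
Proof.
  intros Lx Ly HN (u & w & H1 & H2 & H3 & H4 & H5).
  set (R := fun v => P v /\ x0 <= fx v <= x0 + N /\ y0 <= fy v <= y0 + 3 * N) in *.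
  destruct (classic (exists v1 v2, connected_in R om u v1 /\ connected_in R om u v2 /\
     fy v1 <= y0 + N /\ y0 + 2 * N <= fy v2)) as [(v1 & v2 & C1 & C2 & E1 & E2)|Hn].
  - right; right.
    assert (C : connected_in R om v1 v2) by (apply conn_trans with u; auto; apply conn_sym; auto).
    destruct (extraction _ _ _ _ _ _ _ Ly C E1 E2) as (u' & w' & F1 & F2 & C'); [lia|].
    exists u', w'. pose proof (conn_Rg _ _ _ _ C') as [[Ru Hu] [Rw Hw]].
    unfold R in *. repeat split; try tauto; try lia.
    eapply conn_mono; [|exact C']. intros v [[? ?] ?]; unfold R in *; repeat split; tauto || lia.
  - destruct (classic (forall v, connected_in R om u v -> y0 + N < fy v)) as [Hall|Hex].
    + right; left. exists u, w. 
      assert (Hu : y0 + N < fy u) by (apply Hall; apply conn_refl; auto).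
      assert (Hw : y0 + N < fy w) by (apply Hall; auto).
      unfold R in *. repeat split; try tauto; try lia.
      eapply conn_mono; [|apply (conn_restrict _ (fun v => y0 + N < fy v) _ _ _ H5 Hall)].
      intros v [[? ?] ?]; repeat split; tauto || lia.
    + left. apply not_all_ex_not in Hex. destruct Hex as [v1 Hv1].
      apply Classical_Prop.imply_to_and in Hv1. destruct Hv1 as [C1 E1].
      assert (Hall : forall v, connected_in R om u v -> fy v < y0 + 2 * N).
      { intros v Cv. destruct (Z_lt_ge_dec (fy v) (y0 + 2 * N)); auto.
        exfalso; apply Hn; exists v1, v; repeat split; auto; lia. }
      exists u, w.
      assert (Hu : fy u < y0 + 2 * N) by (apply Hall; apply conn_refl; auto).
      assert (Hw : fy w < y0 + 2 * N) by (apply Hall; auto).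
      unfold R in *. repeat split; try tauto; try lia.
      eapply conn_mono; [|apply (conn_restrict _ (fun v => fy v < y0 + 2 * N) _ _ _ H5 Hall)].
      intros v [[? ?] ?]; repeat split; tauto || lia.
Qed.

Open Scope Z_scope.

Definition Gz k p N := Pr p (box_edges 0 N 0 (2*N) k) (cross (inBox 0 N 0 (2*N) k) vx 0 N).

Lemma G_fcross k p n : f_cross k p n (2*n) = Gz k p (Z.of_nat n).
Proof. unfold f_cross, Gz. rewrite Nat2Z.inj_mul. reflexivity. Qed.

Lemma probF_box p k l a1 b1 a2 b2 f s t : (forall e, supp (inBox a1 b1 a2 b2 k) e -> In e l) ->
  probF p l all_closed (ind (cross (inBox a1 b1 a2 b2 k) f s t)) =
  Pr p (box_edges a1 b1 a2 b2 k) (cross (inBox a1 b1 a2 b2 k) f s t).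
Proof.
  intro H. rewrite Pr_F. apply (probF_restrict p (supp (inBox a1 b1 a2 b2 k))). apply cross_dep.
  intros e He; split; intro; [apply box_edges_In; auto|auto].
Qed.

Lemma PrHB p k l x0 y0 N : (forall e, supp (inBox x0 (x0+N) y0 (y0+2*N) k) e -> In e l) ->
  probF p l all_closed (ind (cross (inBox x0 (x0+N) y0 (y0+2*N) k) vx x0 (x0+N))) = Gz k p N.
Proof.
  intro H. rewrite probF_box by auto. unfold Gz.
  apply (Pr_trans p k x0 y0 0 N 0 (2*N)) with (c := x0); try ring. intro v; unfold trho; vsimpl; lia.
Qed.

Lemma PrVB p k l x0 y0 N : (forall e, supp (inBox x0 (x0+2*N) y0 (y0+N) k) e -> In e l) ->
  probF p l all_closed (ind (cross (inBox x0 (x0+2*N) y0 (y0+N) k) vy y0 (y0+N))) = Gz k p N.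
Proof.
  intro H. rewrite probF_box by auto. unfold Gz.
  rewrite (Pr_trans p k (x0 + 2*N) y0 (-(2*N)) (-0) 0 N _ _ _ _ vy y0 0 N); try ring.
  - apply Pr_rot.
  - intro v; unfold trho; vsimpl; lia.
Qed.

Lemma cross_mono2 (R1 R2 : V -> Prop) f a b a' b' om : a = a' -> b = b' ->
  (forall v, R1 v -> R2 v) -> cross R1 f a b om -> cross R2 f a' b' om.
Proof. intros -> ->; apply cross_mono. Qed.

Lemma probF_le3 (p : R) l o (E A B C : cfg -> Prop) : (0 <= p <= 1)%R -> (forall x, E x -> A x \/ B x \/ C x) ->
  (probF p l o (ind E) <= probF p l o (ind A) + probF p l o (ind B) + probF p l o (ind C))%R.
Proof.
  intros Hp H. rewrite <- !probF_plus. apply probF_le; auto. intro x; unfold ind.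
  eapply Rle_trans; [apply ind_mono; apply H|]. eapply Rle_trans; [apply ind_or|].
  pose proof (ind_or (B x) (C x)). lra.
Qed.

Lemma supp_sub l (B1 B2 : V -> Prop) : (forall v, B1 v -> B2 v) -> (forall e, supp B2 e -> In e l) ->
  forall e, supp B1 e -> In e l.
Proof. intros H1 H2 e He; apply H2; eapply supp_mono; eauto. Qed.

Lemma bound_H3 (p : R) k l x0 y0 N : (0 <= p <= 1)%R -> 0 <= N ->
  (forall e, supp (inBox (x0-N) (x0+N) y0 (y0+3*N) k) e -> In e l) ->
  (probF p l all_closed (ind (cross (inBox x0 (x0+N) y0 (y0+3*N) k) vx x0 (x0+N))) <= 3 * Gz k p N)%R.
Proof.
  intros Hp HN Hl.
  eapply Rle_trans.
  { apply probF_le3 with (A := cross (inBox x0 (x0+N) y0 (y0+2*N) k) vx x0 (x0+N))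
     (B := cross (inBox x0 (x0+N) (y0+N) ((y0+N)+2*N) k) vx x0 (x0+N))
     (C := cross (inBox (x0-N) ((x0-N)+2*N) (y0+N) ((y0+N)+N) k) vy (y0+N) ((y0+N)+N)); auto.
    intros x Hx.
    assert (Hx' : cross (fun v => (0 <= vz v <= Z.of_nat k) /\ x0 <= vx v <= x0 + N /\ y0 <= vy v <= y0 + 3 * N) vx x0 (x0+N) x)
      by (eapply cross_mono; [|exact Hx]; unfold inBox; intros; tauto).
    destruct (D3gen _ _ _ _ _ _ _ lip_vx lip_vy HN Hx') as [H|[H|H]]; [left|right;left|right;right];
     (eapply cross_mono2; [| |intros v Hv|exact H]); unfold inBox in *; lia. }
  rewrite !PrHB, PrVB. lra.
  all: eapply supp_sub; [|exact Hl]; unfold inBox; intros; lia.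
Qed.

Lemma bound_V3 (p : R) k l x0 y0 N : (0 <= p <= 1)%R -> 0 <= N ->
  (forall e, supp (inBox x0 (x0+3*N) (y0-N) (y0+N) k) e -> In e l) ->
  (probF p l all_closed (ind (cross (inBox x0 (x0+3*N) y0 (y0+N) k) vy y0 (y0+N))) <= 3 * Gz k p N)%R.
Proof.
  intros Hp HN Hl.
  eapply Rle_trans.
  { apply probF_le3 with (A := cross (inBox x0 (x0+2*N) y0 (y0+N) k) vy y0 (y0+N))
     (B := cross (inBox (x0+N) ((x0+N)+2*N) y0 (y0+N) k) vy y0 (y0+N))
     (C := cross (inBox (x0+N) ((x0+N)+N) (y0-N) ((y0-N)+2*N) k) vx (x0+N) ((x0+N)+N)); auto.
    intros x Hx.
    assert (Hx' : cross (fun v => (0 <= vz v <= Z.of_nat k) /\ y0 <= vy v <= y0 + N /\ x0 <= vx v <= x0 + 3 * N) vy y0 (y0+N) x)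
      by (eapply cross_mono; [|exact Hx]; unfold inBox; intros; tauto).
    destruct (D3gen _ _ _ _ _ _ _ lip_vy lip_vx HN Hx') as [H|[H|H]]; [left|right;left|right;right];
     (eapply cross_mono2; [| |intros v Hv|exact H]); unfold inBox in *; lia. }
  rewrite !PrVB, PrHB. lra.
  all: eapply supp_sub; [|exact Hl]; unfold inBox; intros; lia.
Qed.

Open Scope Z_scope.

Section Blocks.
Variable k : nat.
Variable N : Z.
Hypothesis HN : 0 < N.

Definition blk (v : V) : Z * Z := (vx v / N, vy v / N).

Definition E1 (b : Z * Z) := let (i, j) := b in
  cross (inBox ((i+1)*N) ((i+1)*N+N) ((j-1)*N) ((j-1)*N+3*N) k) vx ((i+1)*N) ((i+1)*N+N).
Definition E2 (b : Z * Z) := let (i, j) := b in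
  cross (inBox ((i-1)*N) ((i-1)*N+N) ((j-1)*N) ((j-1)*N+3*N) k) vx ((i-1)*N) ((i-1)*N+N).
Definition E3 (b : Z * Z) := let (i, j) := b in
  cross (inBox ((i-1)*N) ((i-1)*N+3*N) ((j+1)*N) ((j+1)*N+N) k) vy ((j+1)*N) ((j+1)*N+N).
Definition E4 (b : Z * Z) := let (i, j) := b in
  cross (inBox ((i-1)*N) ((i-1)*N+3*N) ((j-1)*N) ((j-1)*N+N) k) vy ((j-1)*N) ((j-1)*N+N).
Definition bad (b : Z * Z) (om : cfg) : Prop := E1 b om \/ E2 b om \/ E3 b om \/ E4 b om.

Definition box3 (b : Z * Z) := let (i, j) := b in inBox ((i-1)*N) ((i+2)*N) ((j-1)*N) ((j+2)*N) k.
Definition box5 (b : Z * Z) := let (i, j) := b in inBox ((i-2)*N) ((i+3)*N) ((j-2)*N) ((j+3)*N) k.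

Lemma bad_dep b : depP (supp (box3 b)) (bad b).
Proof.
  destruct b as [i j]. unfold bad.
  assert (H : forall R f s t, (forall v, R v -> box3 (i,j) v) -> depP (supp (box3 (i,j))) (cross R f s t)).
  { intros R f s t HR. eapply depP_mono; [|apply cross_dep]. intros e He. eapply supp_mono; eauto. }
  assert (H1 : depP (supp (box3 (i,j))) (E1 (i,j))) by (apply H; intros v; unfold box3, inBox; nia).
  assert (H2 : depP (supp (box3 (i,j))) (E2 (i,j))) by (apply H; intros v; unfold box3, inBox; nia).
  assert (H3 : depP (supp (box3 (i,j))) (E3 (i,j))) by (apply H; intros v; unfold box3, inBox; nia).
  assert (H4 : depP (supp (box3 (i,j))) (E4 (i,j))) by (apply H; intros v; unfold box3, inBox; nia).
  intros o o' Ha. rewrite (H1 o o' Ha), (H2 o o' Ha), (H3 o o' Ha), (H4 o o' Ha). tauto.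
Qed.

Lemma bad_bound (p : R) l b : (0 <= p <= 1)%R -> (forall e, supp (box5 b) e -> In e l) ->
  (probF p l all_closed (ind (bad b)) <= 12 * Gz k p N)%R.
Proof.
  intros Hp Hl. destruct b as [i j].
  assert (Hor : forall (A B C D : cfg -> Prop), (probF p l all_closed (ind (fun x => A x \/ B x \/ C x \/ D x)) <=
     probF p l all_closed (ind A) + probF p l all_closed (ind B) + probF p l all_closed (ind C) + probF p l all_closed (ind D))%R).
  { intros. rewrite <- !probF_plus. apply probF_le; auto. intro x; unfold ind.
    pose proof (ind_or (A x) (B x \/ C x \/ D x)). pose proof (ind_or (B x) (C x \/ D x)).
    pose proof (ind_or (C x) (D x)). lra. }
  eapply Rle_trans; [apply Hor|]. unfold E1, E2, E3, E4.
  pose proof (bound_H3 p k l ((i+1)*N) ((j-1)*N) N Hp ltac:(lia)).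
  pose proof (bound_H3 p k l ((i-1)*N) ((j-1)*N) N Hp ltac:(lia)).
  pose proof (bound_V3 p k l ((i-1)*N) ((j+1)*N) N Hp ltac:(lia)).
  pose proof (bound_V3 p k l ((i-1)*N) ((j-1)*N) N Hp ltac:(lia)).
  assert (S : forall a1 b1 a2 b2, (forall v, inBox a1 b1 a2 b2 k v -> box5 (i,j) v) ->
    forall e, supp (inBox a1 b1 a2 b2 k) e -> In e l) by (intros; eapply supp_sub; eauto).
  lapply H; [intro|apply S; unfold box5, inBox; intros; nia].
  lapply H0; [intro|apply S; unfold box5, inBox; intros; nia].
  lapply H1; [intro|apply S; unfold box5, inBox; intros; nia].
  lapply H2; [intro|apply S; unfold box5, inBox; intros; nia].
  lra.
Qed.

Definition far (b b' : Z * Z) := 4 <= Z.abs (fst b - fst b') \/ 4 <= Z.abs (snd b - snd b').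

Lemma far_disjoint b b' e : far b b' -> supp (box3 b) e -> supp (box3 b') e -> False.
Proof.
  destruct b as [i j], b' as [i' j']. unfold far, supp, box3, inBox; simpl. intros Hf [_ [H1 _]] [_ [H2 _]].
  destruct Hf as [Hf|Hf].
  - destruct (Z_le_gt_dec i i'); [assert (i + 4 <= i') by lia | assert (i' + 4 <= i) by lia]; nia.
  - destruct (Z_le_gt_dec j j'); [assert (j + 4 <= j') by lia | assert (j' + 4 <= j) by lia]; nia.
Qed.

Definition dblk (b : Z * Z) (v : V) : Z := let (i, j) := b in
  Z.max (Z.max (i*N - vx v) (vx v - (i+1)*N)) (Z.max (j*N - vy v) (vy v - (j+1)*N)).

Lemma lip_dblk b : lip (dblk b).
Proof. destruct b as [i j]; intros y z h1 h2 h3; unfold dblk; lia. Qed.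

Lemma blk_bounds v : N * (vx v / N) <= vx v < N * (vx v / N) + N /\ N * (vy v / N) <= vy v < N * (vy v / N) + N.
Proof.
  pose proof (Z.div_mod (vx v) N ltac:(lia)). pose proof (Z.mod_pos_bound (vx v) N HN).
  pose proof (Z.div_mod (vy v) N ltac:(lia)). pose proof (Z.mod_pos_bound (vy v) N HN). lia.
Qed.

Lemma dblk_in v : dblk (blk v) v <= 0.
Proof. pose proof (blk_bounds v). unfold dblk, blk. nia. Qed.

Lemma bad_of_conn om y v : connected_in (inSlab k) om y v -> N <= dblk (blk y) v -> bad (blk y) om.
Proof.
  intros C Hd. pose proof (dblk_in y) as Hy.
  destruct (blk y) as [i j] eqn:Eb.
  destruct (extraction _ _ _ _ _ 0 N (lip_dblk (i,j)) C Hy Hd ltac:(lia)) as (u1 & w1 & F1 & F2 & C1).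
  pose proof (conn_Rg _ _ _ _ C1) as [[_ G1] [_ G2]].
  unfold dblk in F1, F2, G1, G2.
  set (R := fun v => inSlab k v /\ 0 <= dblk (i, j) v <= N) in *.
  assert (RB : forall v, R v -> (i-1)*N <= vx v <= (i+2)*N /\ (j-1)*N <= vy v <= (j+2)*N /\ inSlab k v).
  { intros v0 [Hs Hv0]; unfold dblk in Hv0; split; [|split]; auto; nia. }
  unfold bad, E1, E2, E3, E4.
  destruct (Z.eq_dec (vx w1 - (i+1)*N) N) as [Ha|Ha];
  [|destruct (Z.eq_dec (i*N - vx w1) N) as [Hb|Hb];
  [|destruct (Z.eq_dec (vy w1 - (j+1)*N) N) as [Hc|Hc]]].
  - left. destruct (extraction _ _ _ _ _ ((i+1)*N) ((i+1)*N+N) lip_vx C1) as (u2 & w2 & K1 & K2 & C2); try lia.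
    pose proof (conn_Rg _ _ _ _ C2) as [[R1 _] [R2 _]].
    exists u2, w2. apply RB in R1; apply RB in R2.
    split; [unfold inBox, inSlab in *; lia|]. split; [lia|]. split; [unfold inBox, inSlab in *; lia|]. split; [lia|].
    eapply conn_mono; [|exact C2]. intros v0 [Hv0 Hv1]. apply RB in Hv0. unfold inBox, inSlab in *. lia.
  - right; left.
    destruct (extraction _ _ _ _ _ (-(i*N)) (-((i-1)*N)) (lip_opp _ lip_vx) C1) as (u2 & w2 & K1 & K2 & C2); try lia.
    pose proof (conn_Rg _ _ _ _ C2) as [[R1 _] [R2 _]].
    exists w2, u2. apply RB in R1; apply RB in R2.
    split; [unfold inBox, inSlab in *; lia|]. split; [lia|]. split; [unfold inBox, inSlab in *; lia|]. split; [lia|].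
    apply conn_sym. eapply conn_mono; [|exact C2]. intros v0 [Hv0 Hv1]. apply RB in Hv0. unfold inBox, inSlab in *. lia.
  - right; right; left.
    destruct (extraction _ _ _ _ _ ((j+1)*N) ((j+1)*N+N) lip_vy C1) as (u2 & w2 & K1 & K2 & C2); try lia.
    pose proof (conn_Rg _ _ _ _ C2) as [[R1 _] [R2 _]].
    exists u2, w2. apply RB in R1; apply RB in R2.
    split; [unfold inBox, inSlab in *; lia|]. split; [lia|]. split; [unfold inBox, inSlab in *; lia|]. split; [lia|].
    eapply conn_mono; [|exact C2]. intros v0 [Hv0 Hv1]. apply RB in Hv0. unfold inBox, inSlab in *. lia.
  - right; right; right.
    assert (Hd' : j*N - vy w1 = N) by lia.
    destruct (extraction _ _ _ _ _ (-(j*N)) (-((j-1)*N)) (lip_opp _ lip_vy) C1) as (u2 & w2 & K1 & K2 & C2); try lia.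
    pose proof (conn_Rg _ _ _ _ C2) as [[R1 _] [R2 _]].
    exists w2, u2. apply RB in R1; apply RB in R2.
    split; [unfold inBox, inSlab in *; lia|]. split; [lia|]. split; [unfold inBox, inSlab in *; lia|]. split; [lia|].
    apply conn_sym. eapply conn_mono; [|exact C2]. intros v0 [Hv0 Hv1]. apply RB in Hv0. unfold inBox, inSlab in *. lia.
Qed.
End Blocks.

Open Scope Z_scope.

Definition near (a b : Z * Z) := Z.abs (fst a - fst b) <= 1 /\ Z.abs (snd a - snd b) <= 1.
Definition chain (l : list (Z * Z)) := forall l1 l2 x y, l = l1 ++ x :: y :: l2 -> near x y.

Lemma chain_cons x y l : near x y -> chain (y :: l) -> chain (x :: y :: l).
Proof.
  intros H C l1 l2 a b E. destruct l1 as [|c l1]; simpl in E; inversion E; subst; auto.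
  apply (C l1 l2); auto.
Qed.

Lemma chain_one x : chain [x].
Proof. intros l1 l2 a b E. destruct l1 as [|c [|d l1]]; simpl in E; inversion E. Qed.

Lemma chain_tail x l : chain (x :: l) -> chain l.
Proof. intros C l1 l2 a b E. apply (C (x :: l1) l2). rewrite E; auto. Qed.

Lemma chain_head x y l : chain (x :: y :: l) -> near x y.
Proof. intros C. apply (C [] l); auto. Qed.

Lemma chain_app_r l1 l2 : chain (l1 ++ l2) -> chain l2.
Proof. induction l1; simpl; auto. intro C; apply IHl1; eapply chain_tail; eauto. Qed.

Lemma chain_app_l l1 l2 : chain (l1 ++ l2) -> chain l1.
Proof. intros C m1 m2 a b E. apply (C m1 (m2 ++ l2)). rewrite E. rewrite <- app_assoc; auto. Qed.

Lemma near_sym a b : near a b -> near b a.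
Proof. unfold near; lia. Qed.

Lemma chain_rev l : chain l -> chain (rev l).
Proof.
  intros C l1 l2 a b E. apply near_sym. apply (C (rev l2) (rev l1)).
  rewrite <- (rev_involutive l), E. rewrite rev_app_distr. simpl. rewrite <- !app_assoc. reflexivity.
Qed.

Lemma chain_firstn n l : chain l -> chain (firstn n l).
Proof. intro C. apply (chain_app_l _ (skipn n l)). rewrite firstn_skipn; auto. Qed.

Definition dirs : list (Z * Z) :=
  [(-1,-1);(-1,0);(-1,1);(0,-1);(0,0);(0,1);(1,-1);(1,0);(1,1)].

Fixpoint chains_from (b : Z * Z) (r : nat) : list (list (Z * Z)) :=
  match r with
  | O => [[b]]
  | S r' => flat_map (fun d => map (cons b) (chains_from (fst b + fst d, snd b + snd d) r')) dirs
  end.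

Lemma length_flat_map_const {A B} (f : A -> list B) l c : (forall x, length (f x) = c) ->
  length (flat_map f l) = (length l * c)%nat.
Proof. intro H; induction l; simpl; auto. rewrite length_app, H, IHl. lia. Qed.

Lemma chains_len b r : length (chains_from b r) = (9 ^ r)%nat.
Proof.
  revert b; induction r; intro b; [reflexivity|]. cbn [chains_from].
  rewrite (length_flat_map_const _ _ (9 ^ r)%nat). simpl; lia.
  intro d; rewrite length_map; auto.
Qed.

Lemma near_dirs a b : near a b -> In (fst b - fst a, snd b - snd a) dirs.
Proof.
  unfold near; intros [H1 H2].
  assert (fst b - fst a = -1 \/ fst b - fst a = 0 \/ fst b - fst a = 1) as [E|[E|E]] by lia;
  (assert (snd b - snd a = -1 \/ snd b - snd a = 0 \/ snd b - snd a = 1) as [F|[F|F]] by lia);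
  rewrite E, F; simpl; tauto.
Qed.

Lemma chains_in r : forall b l, chain (b :: l) -> length l = r -> In (b :: l) (chains_from b r).
Proof.
  induction r; intros b l C E.
  - destruct l; simpl in *; [auto|lia].
  - destruct l as [|y l]; simpl in E; [lia|]. cbn [chains_from]. apply in_flat_map.
    exists (fst y - fst b, snd y - snd b). split. apply near_dirs. apply (chain_head _ _ _ C).
    apply in_map. simpl. replace (fst b + (fst y - fst b), snd b + (snd y - snd b)) with y
      by (destruct y; simpl; f_equal; lia).
    apply IHr. eapply chain_tail; eauto. lia.
Qed.

Definition nrm (b : Z * Z) := Z.max (Z.abs (fst b)) (Z.abs (snd b)).

Lemma chain_firstn_norm r : forall a l, chain (a :: l) -> forall x, In x (firstn (S r) (a :: l)) ->
  nrm x <= nrm a + Z.of_nat r.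
Proof.
  induction r; intros a l C x Hx; simpl in Hx.
  - destruct Hx as [<-|[]]; lia.
  - destruct Hx as [<-|Hx]; [lia|]. destruct l as [|y l]; [destruct Hx|].
    pose proof (chain_head _ _ _ C) as Hn. unfold near, nrm in *.
    specialize (IHr y l (chain_tail _ _ C) x Hx). unfold nrm in IHr. lia.
Qed.

Lemma chain_all_norm a l : chain (a :: l) -> forall x, In x (a :: l) -> nrm x <= nrm a + Z.of_nat (length l).
Proof.
  intros C x Hx. apply (chain_firstn_norm (length l) a l C). rewrite firstn_all2; auto.
Qed.

Open Scope Z_scope.

Fixpoint PW (s : list (Z * Z)) : Prop :=
  match s with [] => True | b :: s' => (forall b', In b' s' -> far b b') /\ PW s' end.

Definition near3b (a b : Z * Z) : bool := (Z.abs (fst a - fst b) <=? 3) && (Z.abs (snd a - snd b) <=? 3).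

Definition box7 (a : Z * Z) : list (Z * Z) :=
  flat_map (fun i => map (fun j => (fst a + i, snd a + j)) (zrange (-3) 3)) (zrange (-3) 3).

Lemma box7_len a : length (box7 a) = 49%nat.
Proof. unfold box7. rewrite (length_flat_map_const _ _ 7%nat); [reflexivity|]. intro; rewrite length_map; reflexivity. Qed.

Lemma box7_in a b : near3b a b = true -> In b (box7 a).
Proof.
  unfold near3b; rewrite Bool.andb_true_iff, !Z.leb_le; intros [H1 H2].
  unfold box7. apply in_flat_map. exists (fst b - fst a). split. apply zrange_In; lia.
  apply in_map_iff. exists (snd b - snd a). split. destruct b; simpl; f_equal; lia. apply zrange_In; lia.
Qed.

Lemma filter_len_split {A} (f : A -> bool) l :
  (length (filter f l) + length (filter (fun x => negb (f x)) l))%nat = length l.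
Proof. induction l; simpl; auto. destruct (f a); simpl; lia. Qed.

Lemma sep_subset n : forall L, (length L <= n)%nat -> NoDup L ->
  exists s, incl s L /\ PW s /\ (length L <= 49 * length s)%nat.
Proof.
  induction n; intros L Hl Hd.
  - destruct L; simpl in Hl; [|lia]. exists []; simpl; repeat split; auto. apply incl_nil_l.
  - destruct L as [|a L']. { exists []; simpl; repeat split; auto. apply incl_nil_l. }
    inversion Hd as [|? ? Ha Hd']; subst.
    set (L'' := filter (fun b => negb (near3b a b)) L').
    destruct (IHn L'') as (s & Hs1 & Hs2 & Hs3).
    { unfold L''. pose proof (filter_len_split (near3b a) L'). simpl in Hl. lia. }
    { apply NoDup_filter; auto. }
    exists (a :: s). split; [|split].
    + intros x [<-|Hx]; simpl; auto. right. apply Hs1 in Hx. unfold L'' in Hx. apply filter_In in Hx; tauto.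
    + simpl. split; auto. intros b' Hb'. apply Hs1 in Hb'. unfold L'' in Hb'. apply filter_In in Hb'.
      destruct Hb' as [_ Hb']. unfold near3b, far in *. apply Bool.negb_true_iff in Hb'.
      apply Bool.andb_false_iff in Hb'. rewrite !Z.leb_gt in Hb'. lia.
    + assert (Hc : (length (a :: filter (near3b a) L') <= 49)%nat).
      { rewrite <- (box7_len a). apply NoDup_incl_length.
        - constructor. rewrite filter_In; tauto. apply NoDup_filter; auto.
        - intros x [<-|Hx]. apply box7_in. unfold near3b; rewrite !Z.sub_diag; reflexivity.
          apply filter_In in Hx. apply box7_in; tauto. }
      pose proof (filter_len_split (near3b a) L'). simpl in *. unfold L'' in *. lia.
Qed.

Lemma ind_iff (P Q : Prop) : (P <-> Q) -> indicator P = indicator Q.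
Proof.
  intro H. unfold indicator. destruct (excluded_middle_informative P), (excluded_middle_informative Q); tauto.
Qed.

Lemma depP_all k N (HN : 0 < N) s : depP (fun e => exists b, In b s /\ supp (box3 k N b) e) (fun o => forall b, In b s -> bad k N b o).
Proof.
  intros o o' Ha. split; intros H b Hb.
  - apply (bad_dep k N HN b o o'); auto. intros v d Hs. apply Ha. exists b; auto.
  - apply (bad_dep k N HN b o o'); auto. intros v d Hs. apply Ha. exists b; auto.
Qed.

Lemma prod_bad (p : R) k N (HN : 0 < N) l s (c : R) : (0 <= p <= 1)%R -> (0 <= c)%R -> PW s ->
  (forall b, In b s -> probF p l all_closed (ind (bad k N b)) <= c)%R ->
  (probF p l all_closed (ind (fun o => forall b, In b s -> bad k N b o)) <= c ^ length s)%R.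
Proof.
  intros Hp Hc. induction s as [|b s IH]; intros Hpw Hb.
  - simpl. rewrite (probF_ext _ _ _ _ (fun _ => 1%R)). rewrite probF_const; lra.
    intro x; unfold ind; apply ind_true; intros b [].
  - simpl in Hpw. destruct Hpw as [Hf Hpw].
    rewrite (probF_ext _ _ _ _ (ind (fun o => bad k N b o /\ (forall b', In b' s -> bad k N b' o)))).
    2:{ intro x; unfold ind; apply ind_iff. split. intro H; split; [apply H; simpl; auto|intros; apply H; simpl; auto].
        intros [H1 H2] b' [<-|Hb']; auto. }
    rewrite (probF_indep p l all_closed (supp (box3 k N b)) (fun e => exists b', In b' s /\ supp (box3 k N b') e)).
    + change (length (b :: s)) with (S (length s)). change (c ^ S (length s))%R with (c * c ^ length s)%R. apply Rmult_le_compat.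
      * apply probF_ge0; auto. intro; apply ind_bounds.
      * apply probF_ge0; auto. intro; apply ind_bounds.
      * apply Hb; simpl; auto.
      * apply IH; auto. intros; apply Hb; simpl; auto.
    + apply bad_dep; auto.
    + apply depP_all; auto.
    + intros e H1 [b' [Hb' H2]]. eapply far_disjoint; [exact HN| | |]; [apply Hf; exact Hb'|exact H1|exact H2].
Qed.

Open Scope Z_scope.

Definition armEv (k m : nat) (om : cfg) : Prop :=
  exists v, vboundary k (ballbar k m) v /\ connected_in (inSlab k) om origin v.

Lemma adjacent_step u w : adjacent u w -> Z.abs (vx w - vx u) <= 1 /\ Z.abs (vy w - vy u) <= 1 /\ Z.abs (vz w - vz u) <= 1.
Proof.
  intros [d [Hd [->| ->]]]; (destruct d as [|[|[|d]]]; [| | |lia]; simpl; unfold vx, vy, vz; simpl; lia).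
Qed.

Lemma boundary_norm k m v : vboundary k (ballbar k m) v ->
  ballbar k m v /\ (Z.abs (vx v) = Z.of_nat m \/ Z.abs (vy v) = Z.of_nat m).
Proof.
  intros [Hb [w [Hs [Ha Hn]]]]. split; auto. apply adjacent_step in Ha.
  unfold ballbar, inBox, inSlab in *. lia.
Qed.

Section Chain.
Variable k : nat.
Variable N : Z.
Hypothesis HN : 0 < N.

Lemma suffix_last {A} (P X : list A) (B : list A) (o : A) : X <> [] -> P ++ X = B ++ [o] -> exists P', X = P' ++ [o].
Proof.
  intros Hx E. destruct (exists_last Hx) as [X' [x ->]]. rewrite app_assoc in E.
  apply app_inj_tail in E. destruct E as [_ ->]. eauto.
Qed.

Lemma cluster_chain om : forall y, connected_in (inSlab k) om origin y ->
  exists L, chain (blk N y :: L) /\ NoDup (blk N y :: L) /\ (exists P, blk N y :: L = P ++ [(0,0)]) /\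
    forall b, In b (blk N y :: L) -> exists y', connected_in (inSlab k) om origin y' /\ blk N y' = b.
Proof.
  intros y C. induction C as [|y z Hy IH Hz Hyz].
  - exists []. assert (E : blk N origin = (0,0)) by reflexivity. rewrite E.
    split; [apply chain_one|]. split; [constructor; [intros []|constructor]|].
    split; [exists []; reflexivity|]. intros b [<-|[]]. exists origin; split; auto. apply conn_refl. 
    unfold inSlab, origin, vz; simpl; lia.
  - destruct IH as (L & C1 & D1 & [P EP] & M1).
    destruct (in_dec (ltac:(decide equality; apply Z.eq_dec) : forall a b : Z * Z, {a = b} + {a <> b}) (blk N z) (blk N y :: L)) as [Hin|Hnin].
    + destruct (in_split _ _ Hin) as [A [B EAB]]. exists B.
      rewrite EAB in C1, D1, M1, EP. split; [|split; [|split]].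
      * eapply chain_app_r; eauto.
      * eapply NoDup_app_remove_l; eauto.
      * eapply suffix_last; [|exact EP]. discriminate.
      * intros b Hb; apply M1. apply in_app_iff; auto.
    + exists (blk N y :: L). split; [|split; [|split]].
      * apply chain_cons; auto. apply open_edge_step in Hyz. pose proof (blk_bounds N HN y). pose proof (blk_bounds N HN z).
        unfold near, blk; simpl. nia.
      * constructor; auto.
      * exists (blk N z :: P). rewrite EP; reflexivity.
      * intros b [<-|Hb]; auto. exists z; split; auto. eapply conn_step; eauto.
Qed.

Lemma blk_far_norm v R : (Z.of_nat R + 3) * N <= Z.abs (vx v) \/ (Z.of_nat R + 3) * N <= Z.abs (vy v) ->
  Z.of_nat R + 1 <= nrm (blk N v).
Proof.
  intros H. pose proof (blk_bounds N HN v). unfold nrm, blk; simpl. nia.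
Qed.

Lemma arm_chains m R om : (Z.of_nat R + 3) * N <= Z.of_nat m -> armEv k m om ->
  exists L, In L (chains_from (0,0) R) /\ NoDup L /\ forall b, In b L -> bad k N b om.
Proof.
  intros HR [v [Hb Cv]]. apply boundary_norm in Hb. destruct Hb as [Hbb Hbn].
  destruct (cluster_chain om v Cv) as (L & C1 & D1 & [P EP] & M1).
  set (Lf := rev (blk N v :: L)).
  assert (ELf : Lf = (0,0) :: rev P) by (unfold Lf; rewrite EP, rev_app_distr; reflexivity).
  assert (CLf : chain Lf) by (apply chain_rev; auto).
  assert (DLf : NoDup Lf) by (apply NoDup_rev; auto).
  assert (Hv : In (blk N v) Lf) by (unfold Lf; rewrite <- in_rev; simpl; auto).
  rewrite ELf in CLf, DLf, Hv.
  pose proof (chain_all_norm _ _ CLf _ Hv) as Hn.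
  assert (Hn2 : Z.of_nat R + 1 <= nrm (blk N v)) by (apply blk_far_norm; lia).
  assert (Hlen : (R <= length (rev P))%nat) by (assert (nrm (0,0) = 0) by reflexivity; lia).
  exists (firstn (S R) ((0,0) :: rev P)). split; [|split].
  - simpl. apply chains_in. apply (chain_firstn (S R)) in CLf. exact CLf.
    rewrite length_firstn; lia.
  - apply (NoDup_app_remove_r _ (skipn (S R) ((0,0) :: rev P))). rewrite firstn_skipn; auto.
  - intros b Hbin.
    pose proof (chain_firstn_norm R _ _ CLf b Hbin) as Hbn'. unfold nrm at 2 in Hbn'; simpl in Hbn'.
    assert (Hb2 : In b (blk N v :: L)).
    { rewrite in_rev. fold Lf. rewrite ELf. rewrite <- (firstn_skipn (S R)). apply in_app_iff; auto. }
    destruct (M1 b Hb2) as [y' [Cy' Ey']]. rewrite <- Ey'.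
    apply (bad_of_conn k N HN om y' v).
    + eapply conn_trans; [apply conn_sym; exact Cy'|exact Cv].
    + rewrite Ey'. destruct b as [i j]. unfold nrm in Hbn'; simpl in Hbn'. unfold dblk.
      unfold ballbar, inBox in Hbb. nia.
Qed.
End Chain.

Open Scope R_scope.

Lemma pow_le1 x n : 0 <= x <= 1 -> x ^ n <= 1.
Proof. intro H; induction n; simpl; [lra|]. pose proof (pow_le x n (proj1 H)). nra. Qed.

Lemma pow_le_dec x n m : 0 <= x <= 1 -> (n <= m)%nat -> x ^ m <= x ^ n.
Proof.
  intros H Hnm. replace m with (n + (m - n))%nat by lia. rewrite pow_add.
  pose proof (pow_le1 x (m - n) H). pose proof (pow_le x n (proj1 H)). pose proof (pow_le x (m-n) (proj1 H)). nra.
Qed.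

Lemma dirs_small d : In d dirs -> (Z.abs (fst d) <= 1 /\ Z.abs (snd d) <= 1)%Z.
Proof. simpl; intros H; repeat destruct H as [<-|H]; simpl; try lia; destruct H. Qed.

Lemma chains_norm r : forall a L, In L (chains_from a r) -> forall x, In x L -> (nrm x <= nrm a + Z.of_nat r)%Z.
Proof.
  induction r; intros a L HL x Hx; cbn [chains_from] in HL.
  - destruct HL as [<-|[]]. destruct Hx as [<-|[]]. lia.
  - apply in_flat_map in HL. destruct HL as [d [Hd HL]]. apply in_map_iff in HL. destruct HL as [L' [<- HL']].
    destruct Hx as [<-|Hx]. lia.
    pose proof (IHr _ _ HL' x Hx). pose proof (dirs_small d Hd). unfold nrm in *; simpl in *. lia.
Qed.

Lemma chains_length r : forall a L, In L (chains_from a r) -> length L = S r.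
Proof.
  induction r; intros a L HL; cbn [chains_from] in HL.
  - destruct HL as [<-|[]]; auto.
  - apply in_flat_map in HL. destruct HL as [d [Hd HL]]. apply in_map_iff in HL. destruct HL as [L' [<- HL']].
    simpl. f_equal. eapply IHr; eauto.
Qed.

Lemma arm_bound k p m (N : Z) R q : 0 <= p <= 1 -> (0 < N)%Z -> ((Z.of_nat R + 3) * N <= Z.of_nat m)%Z ->
  (49 * q <= S R)%nat -> 0 <= 12 * Gz k p N <= 1 ->
  arm_prob k p m <= INR (9 ^ R) * (12 * Gz k p N) ^ q.
Proof.
  intros Hp HN HR Hq HG.
  set (l := box_edges (- Z.of_nat m) (Z.of_nat m) (- Z.of_nat m) (Z.of_nat m) k).
  unfold arm_prob. fold l. rewrite Pr_F.
  change (probF p l all_closed (ind (armEv k m)) <= INR (9 ^ R) * (12 * Gz k p N) ^ q).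
  eapply Rle_trans.
  { apply (probF_mono p l all_closed _ (fun o => exists L, In L (chains_from (0,0)%Z R) /\
       (NoDup L /\ forall b, In b L -> bad k N b o))); auto.
    intros o Ho. apply (arm_chains k N HN m R o HR Ho). }
  eapply Rle_trans; [apply probF_union; auto|].
  rewrite <- (chains_len (0,0)%Z R). apply sumR_le_const.
  intros L HL. destruct (classic (NoDup L)) as [D|D].
  - destruct (sep_subset (length L) L (le_n _) D) as (s & Hs1 & Hs2 & Hs3).
    eapply Rle_trans.
    { apply (probF_mono p l all_closed _ (fun o => forall b, In b s -> bad k N b o)); auto.
      intros o [_ Ho] b Hb; apply Ho, Hs1; auto. }
    eapply Rle_trans. apply (prod_bad p k N HN l s (12 * Gz k p N)); auto; [lra|].
    + intros b Hb. apply bad_bound; auto. intros e He. unfold l. apply box_edges_In.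
      eapply supp_mono; [|exact He]. apply Hs1 in Hb. pose proof (chains_norm _ _ _ HL b Hb) as Hn.
      destruct b as [i j]. unfold nrm in Hn; simpl in Hn. intros v Hv; unfold box5, inBox in *. nia.
    + apply pow_le_dec; auto. pose proof (chains_length _ _ _ HL). lia.
  - rewrite (probF_ext _ _ _ _ (fun _ => 0)). rewrite probF_const. apply pow_le; lra.
    intro x; unfold ind; apply ind_false; tauto.
Qed.

Open Scope R_scope.

Lemma conn_closed Rg u v : connected_in Rg all_closed u v -> u = v.
Proof.
  induction 1; auto. subst. destruct H1 as [d [_ [[_ H1]|[_ H1]]]]; discriminate.
Qed.

Lemma not_arm_closed k m : (1 <= m)%nat -> ~ armEv k m all_closed.
Proof.
  intros Hm [v [Hb Hc]]. apply conn_closed in Hc. subst. apply boundary_norm in Hb.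
  destruct Hb as [_ H]. unfold origin, vx, vy in H; simpl in H. lia.
Qed.

Lemma arm_small k p m : 0 <= p <= 1 -> (1 <= m)%nat ->
  arm_prob k p m <= 1 - (1 - p) ^ length (box_edges (- Z.of_nat m) (Z.of_nat m) (- Z.of_nat m) (Z.of_nat m) k).
Proof.
  intros Hp Hm. unfold arm_prob. rewrite Pr_F.
  set (l := box_edges (- Z.of_nat m) (Z.of_nat m) (- Z.of_nat m) (Z.of_nat m) k).
  change (probF p l all_closed (ind (armEv k m)) <= 1 - (1 - p) ^ length l).
  pose proof (probF_compl p l all_closed (armEv k m)).
  pose proof (probF_lower p l (ind (fun x => ~ armEv k m x)) Hp (fun x => proj1 (ind_bounds _))).
  assert (E : ind (fun x => ~ armEv k m x) all_closed = 1) by (unfold ind; apply ind_true; apply not_arm_closed; auto).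
  rewrite E in H0. lra.
Qed.

Lemma conn_line k (N : Z) o : (0 <= N)%Z ->
  (forall v d, supp (inBox 0 N 0 (2*N) k) (v,d) -> o v d = true) ->
  forall t : nat, (Z.of_nat t <= N)%Z -> connected_in (inBox 0 N 0 (2*N) k) o (0%Z,0%Z,0%Z) (Z.of_nat t,0%Z,0%Z).
Proof.
  intros HN Ho. induction t; intros Ht.
  - change (Z.of_nat 0) with 0%Z. apply conn_refl. unfold inBox, vx, vy, vz; cbn [fst snd]; lia.
  - rewrite Nat2Z.inj_succ in *. eapply conn_step. apply IHt; lia. unfold inBox, vx, vy, vz; cbn [fst snd]; lia.
    exists 0%nat. split; [lia|]. left. split.
    + unfold shift, vx, vy, vz; cbn [fst snd]. repeat (apply pair_equal_spec; split); lia.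
    + apply Ho. split; cbn [fst snd]; [lia|]. unfold inBox, shift, vx, vy, vz; cbn [fst snd]; lia.
Qed.

Lemma G_one k N : (0 <= N)%Z -> Gz k 1 N = 1.
Proof.
  intro HN. unfold Gz. rewrite Pr_F, probF_one. apply ind_true.
  assert (E : Z.of_nat (Z.to_nat N) = N) by (apply Z2Nat.id; auto).
  exists (0%Z,0%Z,0%Z), (Z.of_nat (Z.to_nat N), 0%Z, 0%Z).
  split; [unfold inBox, vx, vy, vz; cbn [fst snd]; lia|].
  split; [reflexivity|].
  split; [unfold inBox, vx, vy, vz; cbn [fst snd]; lia|].
  split; [unfold vx; cbn [fst snd]; lia|].
  apply conn_line; auto; try lia.
  intros v d Hs. apply setT_in. apply box_edges_In; auto.
Qed.

Open Scope R_scope.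

Lemma exp_le x y : x <= y -> exp x <= exp y.
Proof. intro H; destruct (Rle_lt_or_eq_dec _ _ H) as [H'|H']; [left; apply exp_increasing; auto|subst; lra]. Qed.

Lemma list_sum_ge f K m : (m < K)%nat -> (f m <= list_sum (map f (seq 0 K)))%nat.
Proof.
  intro H. induction K; [lia|]. rewrite seq_S, map_app, list_sum_app. simpl.
  destruct (Nat.eq_dec m K); [subst; lia|]. specialize (IHK ltac:(lia)). lia.
Qed.

Lemma G_nonneg k p N : 0 <= p <= 1 -> 0 <= Gz k p N.
Proof. intro Hp. unfold Gz. rewrite Pr_F. apply probF_ge0; auto. intro; apply ind_bounds. Qed.

Theorem mainTheorem10 :
  exists c2 : R, 0 < c2 /\
    forall (k : nat) (p : R), (1 <= k)%nat -> 0 <= p <= 1 ->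
      (exists n : nat, (1 <= n)%nat /\ f_cross k p n (2 * n) < c2) ->
      exists c : R, 0 < c /\
        forall m : nat, (1 <= m)%nat -> arm_prob k p m <= exp (- c * INR m).
Proof.
  set (K := 9 ^ 49).
  assert (HK : 1 <= K) by (apply pow_R1_Rle; lra).
  exists (/ (24 * K)). split; [apply Rinv_0_lt_compat; lra|].
  intros k p hk hp [n [hn hf]].
  rewrite G_fcross in hf. set (N := Z.of_nat n) in *. set (G := Gz k p N) in *.
  assert (HN : (0 < N)%Z) by (unfold N; lia).
  assert (G0 : 0 <= G) by (apply G_nonneg; auto).
  assert (HKG : K * (12 * G) <= / 2).
  { assert (G * (24 * K) < 1).
    { apply (Rmult_lt_compat_r (24 * K)) in hf; [|lra]. rewrite Rinv_l in hf; lra. }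
    nra. }
  assert (HG12 : 0 <= 12 * G <= 1) by nra.
  assert (Hp1 : p < 1).
  { destruct (Req_dec p 1) as [E|E]; [|lra]. exfalso. subst p.
    unfold G in HKG. rewrite G_one in HKG by lia. nra. }
  set (M0 := (102 * n)%nat).
  assert (HM0 : 0 < INR M0) by (apply lt_0_INR; unfold M0; lia).
  set (len := fun m' : nat => length (box_edges (- Z.of_nat m') (Z.of_nat m') (- Z.of_nat m') (Z.of_nat m') k)).
  set (Ltot := list_sum (map len (seq 0 (S M0)))).
  set (delta := (1 - p) ^ Ltot).
  assert (Hd : 0 < delta <= 1) by (split; [apply pow_lt; lra|apply pow_le1; lra]).
  set (a := 1 - delta / 2).
  assert (Ha : 0 < a < 1) by (unfold a; lra).
  assert (Hla : ln a < 0) by (rewrite <- ln_1; apply ln_increasing; lra).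
  assert (Hl2 : 0 < ln 2) by (rewrite <- ln_1; apply ln_increasing; lra).
  set (c1 := ln 2 / INR M0). set (c' := - ln a / INR M0).
  assert (Hc1 : 0 < c1) by (unfold c1; apply Rdiv_lt_0_compat; lra).
  assert (Hc' : 0 < c' ) by (unfold c'; apply Rdiv_lt_0_compat; lra).
  exists (Rmin c1 c'). split; [apply Rmin_glb_lt; auto|].
  intros m hm. pose proof (Rmin_l c1 c') as Hm1. pose proof (Rmin_r c1 c') as Hm2.
  assert (Hc : 0 < Rmin c1 c') by (apply Rmin_glb_lt; auto).
  destruct (le_lt_dec m M0) as [Hsm|Hlm].
  - eapply Rle_trans; [apply arm_small; auto|].
    assert (Hlen : (len m <= Ltot)%nat) by (apply list_sum_ge; lia).
    pose proof (pow_le_dec (1 - p) (len m) Ltot ltac:(lra) Hlen).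
    fold (len m). fold delta in H.
    apply Rle_trans with a; [unfold a; lra|].
    replace a with (exp (- c' * INR M0)).
    2:{ unfold c'. replace (- (- ln a / INR M0) * INR M0) with (ln a) by (field; lra). apply exp_ln; lra. }
    apply exp_le. apply le_INR in Hsm. pose proof (pos_INR m). nra.
  - set (q := (m / (51 * n))%nat).
    pose proof (Nat.div_mod m (51 * n) ltac:(lia)) as Hdm. pose proof (Nat.mod_upper_bound m (51 * n) ltac:(lia)) as Hmb.
    fold q in Hdm. unfold M0 in Hlm.
    assert (Hq2 : (2 <= q)%nat) by nia.
    set (R := (49 * q - 1)%nat).
    assert (HR : ((Z.of_nat R + 3) * N <= Z.of_nat m)%Z) by (unfold R, N; nia).
    eapply Rle_trans; [apply (arm_bound k p m N R q); auto; lia|].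
    fold G. rewrite pow_INR. replace (INR 9) with 9 by (simpl; lra).
    assert (H9 : 9 ^ R <= K ^ q).
    { unfold K. rewrite <- pow_mult. apply Rle_pow; [lra|]. unfold R; lia. }
    apply Rle_trans with ((K * (12 * G)) ^ q).
    { rewrite (Rpow_mult_distr K (12 * G) q). apply Rmult_le_compat_r; auto. apply pow_le; lra. }
    apply Rle_trans with ((/ 2) ^ q).
    { apply pow_incr. split; [nra|auto]. }
    rewrite <- Rpower_pow by lra. unfold Rpower. rewrite ln_Rinv by lra.
    apply exp_le.
    assert (Hmq : INR m <= INR M0 * INR q).
    { rewrite <- mult_INR. apply le_INR. unfold M0. nia. }
    assert (c1 * INR m <= ln 2 * INR q).
    { unfold c1. apply (Rmult_le_reg_r (INR M0)); auto.
      replace (ln 2 / INR M0 * INR m * INR M0) with (ln 2 * INR m) by (field; lra). nra. }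
    pose proof (pos_INR m). nra.
Qed.
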